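(* Let $m \ge 4$ and $n \ge 3$ be integers and let $d$ be a positive integer. Then there exists a matrix $A \in \mathbb{R}^{[m]\times[n]}$ such that (i) $A$ does not have an elimination ordering, and (ii) for every vector $b \in \mathbb{R}^{[m]}$, the solution graph $G(R(A,b))$ is connected.
   Context: Fix a positive integer $d$ and let $D=\{0,1,\dots,d\}$; $[n]=\{1,\dots,n\}$. For $A\in\mathbb{R}^{[m]\times[n]}$ and $b\in\mathbb{R}^{[m]}$, $R(A,b)=\{x\in D^{[n]} : Ax\ge b\}$ is the set of feasible solutions of the integer linear system $(A,b)$. For $R\subseteq D^{[n]}$, the solution graph $G(R)$ is the undirected graph with vertex set $R$ in which $x,y$ are adjacent iff they differ in exactly one coordinate (Hamming distance $1$). A matrix $A=(a_{ij})$ with column index set $J$ can be eliminated at column $j\in J$ if (i) for every row $i$ with $a_{ij}>0$ we have $a_{ij'}=0$ for all $j'\in J\setminus\{j\}$, or (ii) for every row $i$ with $a_{ij}<0$ we have $a_{ij'}=0$ for all $j'\in J\setminus\{j\}$. For $J'\subseteq [n]$, $\mathrm{elm}(A,J')$ denotes the submatrix of $A$ obtained by deleting the columns indexed by $J'$. A sequence $(j_1,\dots,j_n)$ of the elements of $[n]$ is an elimination ordering (EO) of $A\in\mathbb{R}^{[m]\times[n]}$ if for every $t\in[n]$ the matrix $\mathrm{elm}(A,\{j_1,\dots,j_{t-1}\})$ can be eliminated at column $j_t$. *)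

(* Defs.v *)
From HB Require Import structures.
From mathcomp Require Import all_boot all_order all_algebra.
From mathcomp Require Import Rstruct.
From Stdlib Require Import Reals.
Set Implicit Arguments. Unset Strict Implicit. Unset Printing Implicit Defensive.
Import Order.TTheory GRing.Theory Num.Theory.
Local Open Scope ring_scope.

(* Points of D^[n] with D = {0,...,d}: finite functions 'I_n -> 'I_d.+1. *)
Definition point (d n : nat) := {ffun 'I_n -> 'I_d.+1}.

Definition feasible (d m n : nat) (A : 'M[R]_(m, n)) (b : 'cV[R]_m)
    (x : point d n) : bool :=
  [forall i : 'I_m, b i ord0 <= \sum_(j < n) A i j * (nat_of_ord (x j))%:R].

Definition hamming1 (d n : nat) (x y : point d n) : bool :=
  #|[set j : 'I_n | x j != y j]| == 1%N.

Definition sol_edge (d m n : nat) (A : 'M[R]_(m, n)) (b : 'cV[R]_m) :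
    rel (point d n) :=
  fun x y => [&& feasible A b x, feasible A b y & hamming1 x y].

Definition sol_graph_connected (d m n : nat) (A : 'M[R]_(m, n))
    (b : 'cV[R]_m) : Prop :=
  forall x y : point d n, feasible A b x -> feasible A b y ->
    connect (sol_edge A b) x y.

Definition can_elim (m n : nat) (A : 'M[R]_(m, n)) (J : {set 'I_n})
    (j : 'I_n) : bool :=
  (j \in J) &&
  ([forall i : 'I_m, (0 < A i j) ==> [forall j' in J :\ j, A i j' == 0]]
   || [forall i : 'I_m, (A i j < 0) ==> [forall j' in J :\ j, A i j' == 0]]).

Fixpoint elim_seq (m n : nat) (A : 'M[R]_(m, n)) (J : {set 'I_n})
    (s : seq 'I_n) : Prop :=
  match s with
  | [::] => True
  | j :: s' => can_elim A J j /\ elim_seq A (J :\ j) s'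
  end.

Definition is_EO (m n : nat) (A : 'M[R]_(m, n)) (s : seq 'I_n) : Prop :=
  perm_eq s (enum 'I_n) /\ elim_seq A [set: 'I_n] s.

Definition has_EO (m n : nat) (A : 'M[R]_(m, n)) : Prop :=
  exists s : seq 'I_n, is_EO A s.

(* Main.v *)
Require Import Defs.
From mathcomp Require Import all_boot all_order all_algebra.
From mathcomp Require Import Rstruct.
From Stdlib Require Import Reals.
From HB Require Import structures.
From mathcomp Require Import lra.
Set Implicit Arguments. Unset Strict Implicit. Unset Printing Implicit Defensive.
Import Order.TTheory GRing.Theory Num.Theory.
Local Open Scope ring_scope.


Lemma exmin (T : finType) (t0 : T) (g : T -> R) : exists a, forall a', g a <= g a'.
Proof.
suff: forall s : seq T, exists a, forall a', a' \in s -> g a <= g a'.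
  by case/(_ (enum T)) => a Ha; exists a => a'; apply: Ha; rewrite mem_enum.
elim => [|x s [a Ha]]; first by exists t0.
have [le|lt] := lerP (g a) (g x).
- exists a => a'; rewrite inE => /orP[/eqP->//|]; exact: Ha.
- exists x => a'; rewrite inE => /orP[/eqP->//|/Ha]; move/ltW: lt; exact: le_trans.
Qed.

Definition upd (d n : nat) (x : point d n) (j : 'I_n) (v : 'I_d.+1) : point d n :=
  [ffun k => if k == j then v else x k].

Lemma upd_same d n (x : point d n) j v : upd x j v j = v.
Proof. by rewrite ffunE eqxx. Qed.
Lemma upd_other d n (x : point d n) j v k : k != j -> upd x j v k = x k.
Proof. by move=> h; rewrite ffunE (negbTE h). Qed.
Lemma upd_id d n (x : point d n) j : upd x j (x j) = x.
Proof. by apply/ffunP => k; rewrite ffunE; case: eqP => // ->. Qed.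
Lemma upd_upd d n (x : point d n) j v w : upd (upd x j v) j w = upd x j w.
Proof. by apply/ffunP => k; rewrite !ffunE; case: eqP. Qed.

Lemma ham_upd d n (x : point d n) j v : x j != v -> hamming1 x (upd x j v).
Proof.
move=> h; rewrite /hamming1.
have -> : [set k | x k != upd x j v k] = [set j].
  apply/setP => k; rewrite !inE ffunE; case: (k =P j) => [->|hk].
    exact: h.
  by rewrite eqxx.
by apply/eqP; apply: cards1.
Qed.

Lemma ham_sym d n (x y : point d n) : hamming1 x y = hamming1 y x.
Proof.
rewrite /hamming1.
have -> : [set k | x k != y k] = [set k | y k != x k].
  by apply/setP => k; rewrite !inE eq_sym.
by [].
Qed.

Lemma sol_edge_sym d m n (A : 'M[R]_(m, n)) b : symmetric (@sol_edge d m n A b).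
Proof.
move=> x y; rewrite /sol_edge ham_sym.
by case: (feasible A b x); case: (feasible A b y).
Qed.

Lemma sum_upd m n (A : 'M[R]_(m, n)) i d (x : point d n) j (v : 'I_d.+1) :
  \sum_(k < n) A i k * (nat_of_ord (upd x j v k))%:R =
  \sum_(k < n | k != j) A i k * (nat_of_ord (x k))%:R + A i j * (nat_of_ord v)%:R.
Proof.
rewrite (bigD1 j) //= upd_same addrC; congr (_ + _).
by apply: eq_bigr => k hk; rewrite upd_other.
Qed.

Lemma convex_step (a u v t S b : R) : u <= t <= v ->
  b <= S + a * u -> b <= S + a * v -> b <= S + a * t.
Proof.
case/andP => h1 h2 hu hv.
have [ha|ha] := lerP 0 a.
- apply: (le_trans hu); rewrite lerD2l; exact: ler_wpM2l.
- apply: (le_trans hv); rewrite lerD2l; apply: ler_wnM2l => //; exact: ltW.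
Qed.

Lemma feas_between d m n (A : 'M[R]_(m, n)) b (x : point d n) j (u v t : 'I_d.+1) :
  leq u t -> leq t v -> feasible A b (upd x j u) -> feasible A b (upd x j v) ->
  feasible A b (upd x j t).
Proof.
move=> h1 h2 /forallP Fu /forallP Fv; apply/forallP => i.
move: (Fu i) (Fv i); rewrite !sum_upd.
apply: convex_step; rewrite !ler_nat h1 h2 //.
Qed.

Lemma seg_up d m n (A : 'M[R]_(m, n)) b j (v : 'I_d.+1) :
  forall (k : nat) (x : point d n), subn v (x j) = k -> leq (x j) v -> feasible A b x ->
  feasible A b (upd x j v) -> connect (sol_edge A b) x (upd x j v).
Proof.
elim => [|k IH] x hk hle fx fv.
  have -> : v = x j by apply: val_inj; apply/eqP; rewrite eqn_leq hle /= -subn_eq0 hk.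
  by rewrite upd_id.
have hlt : (nat_of_ord (x j) < nat_of_ord v)%nat by rewrite -subn_gt0 hk.
have ht : ((nat_of_ord (x j)).+1 < d.+1)%nat by apply: leq_trans hlt (ltn_ord v).
pose t := Ordinal ht.
have ft : feasible A b (upd x j t).
  apply: (@feas_between _ _ _ _ _ _ _ (x j) v); rewrite ?upd_id //.
apply: (connect_trans (y := upd x j t)).
  apply: connect1; rewrite /sol_edge fx ft /=; apply: ham_upd.
  by rewrite -val_eqE /= (ltn_eqF (ltnSn _)).
rewrite -(upd_upd x j t v); apply: IH; rewrite ?upd_same ?upd_upd //=.
by rewrite subnS hk.
Qed.

Lemma seg d m n (A : 'M[R]_(m, n)) b j (x : point d n) (v : 'I_d.+1) :
  feasible A b x -> feasible A b (upd x j v) -> connect (sol_edge A b) x (upd x j v).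
Proof.
move=> fx fv; case: (leqP (x j) v) => h.
  exact: (seg_up (erefl _)).
have h' : leq (upd x j v j) (x j) by rewrite upd_same ltnW.
have := @seg_up d m n A b j (x j) _ (upd x j v) (erefl _) h' fv.
rewrite upd_upd upd_id => /(_ fx) c.
by rewrite (sym_connect_sym (@sol_edge_sym d m n A b)).
Qed.

Lemma cube d m n (A : 'M[R]_(m, n)) b :
  forall (k : nat) (x z : point d n), #|[set j | x j != z j]| = k ->
  (forall w : point d n, (forall j, w j = x j \/ w j = z j) -> feasible A b w) ->
  connect (sol_edge A b) x z.
Proof.
elim => [|k IH] x z hk hw.
  suff -> : x = z by [].
  apply/ffunP => j; apply/eqP; apply: contraT => hj.
  have hin : j \in [set j | x j != z j] by rewrite inE.
  have : (0 < #|[set j | x j != z j]|)%nat by apply/card_gt0P; exists j.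
  by rewrite hk.
have : (0 < #|[set j | x j != z j]|)%nat by rewrite hk.
case/card_gt0P => j; rewrite inE => hj.
have fx : feasible A b x by apply: hw => i; left.
have fy : feasible A b (upd x j (z j)).
  apply: hw => i; rewrite ffunE; case: (i =P j) => [->|_]; by [right | left].
apply: (connect_trans (y := upd x j (z j))).
  by apply: connect1; rewrite /sol_edge fx fy ham_upd.
apply: IH.
  have -> : [set i | upd x j (z j) i != z i] = [set i | x i != z i] :\ j.
    apply/setP => i; rewrite !inE ffunE; case: (i =P j) => [->|]; first by rewrite eqxx.
    by [].
  have := cardsD1 j [set i | x i != z i].
  rewrite hk inE hj add1n => -[] //.
move=> w hw'; apply: hw => i; case: (hw' i); rewrite ?ffunE; last by right.
case: (i =P j) => [->|_]; by [right | left].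
Qed.


Definition f (i j : nat) : R := match j, i with
 | 0, 0 | 0, 1 => 1 | 0, 2 | 0, 3 => -1
 | 1, 0 => 1 | 1, 1 => -1
 | 2, 2 => 1 | 2, 3 => -1
 | _, _ => 0 end.

Definition Amx (m n : nat) : 'M[R]_(m, n) := \matrix_(i < m, j < n) f i j.

Definition nR (d : nat) (v : 'I_d.+1) : R := (nat_of_ord v)%:R.

Section S.
Variables (l k d : nat).
Definition c0 : 'I_k.+3 := @Ordinal k.+3 0 isT.
Definition c1 : 'I_k.+3 := @Ordinal k.+3 1 isT.
Definition c2 : 'I_k.+3 := @Ordinal k.+3 2 isT.

Lemma rowsum (x : point d k.+3) (i : 'I_l.+4) :
  \sum_(j < k.+3) Amx l.+4 k.+3 i j * (nat_of_ord (x j))%:R =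
  f i 0 * nR (x c0) + f i 1 * nR (x c1) + f i 2 * nR (x c2).
Proof.
rewrite 3!big_ord_recl big1 ?addr0; last first.
  by move=> j _; rewrite mxE /= mul0r.
rewrite !mxE /= !addrA; congr (_ * nR (x _) + _ * nR (x _) + _ * nR (x _));
  exact: val_inj.
Qed.
End S.

Section T.
Variables (l k d : nat) (b : 'cV[R]_(l.+4)).
Local Notation A := (Amx l.+4 k.+3).
Definition B (i : nat) : R := b (inord i) ord0.
Local Notation X0 x := (nR (x (c0 k))).
Local Notation X1 x := (nR (x (c1 k))).
Local Notation X2 x := (nR (x (c2 k))).

Lemma feasE (x : point d k.+3) :
  feasible A b x <->
  [/\ B 0 <= X0 x + X1 x, B 1 <= X0 x - X1 x, B 2 <= - X0 x + X2 x,
      B 3 <= - X0 x - X2 x & forall i : 'I_l.+4, (3 < i)%nat -> b i ord0 <= 0].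
Proof.
have Bi (i : 'I_l.+4) : b i ord0 = B i by rewrite /B inord_val.
split.
- move/forallP => h.
  have H (i : nat) (hi : (i < l.+4)%nat) := h (Ordinal hi).
  move: (H 0%nat isT) (H 1%nat isT) (H 2%nat isT) (H 3%nat isT).
  rewrite !rowsum !Bi /= => h0 h1 h2 h3; split.
  + move: h0; rewrite !mul1r mul0r addr0 //.
  + move: h1; rewrite mul1r mulN1r mul0r addr0 //.
  + move: h2; rewrite mulN1r mul1r mul0r addr0 //.
  + move: h3; rewrite !mulN1r mul0r addr0 //.
  + move=> [[|[|[|[|i]]]] hi] // _; move: (h (Ordinal hi)); rewrite rowsum /=.
    by rewrite !mul0r !addr0.
- case=> h0 h1 h2 h3 h4; apply/forallP => -[[|[|[|[|i]]]] hi]; rewrite rowsum /=.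
  + move: h0; rewrite Bi /= !mul1r mul0r addr0 //.
  + move: h1; rewrite Bi /= mul1r mulN1r mul0r addr0 //.
  + move: h2; rewrite Bi /= mulN1r mul1r mul0r addr0 //.
  + move: h3; rewrite Bi /= !mulN1r mul0r addr0 //.
  + by rewrite !mul0r !addr0; apply: (h4 (Ordinal hi)).
Qed.
End T.

Lemma maxle (u v u' v' X : R) : Num.max u v <= Num.max u' v' -> u' <= X -> v' <= X ->
  u <= X /\ v <= X.
Proof.
move=> h h1 h2; have : Num.max u v <= X by apply: le_trans h _; rewrite ge_max h1 h2.
by rewrite ge_max => /andP[].
Qed.

Section U.
Variables (l k d : nat) (b : 'cV[R]_(l.+4)).
Local Notation A := (Amx l.+4 k.+3).
Local Notation X0 x := (nR (x (c0 k))).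
Local Notation X1 x := (nR (x (c1 k))).
Local Notation X2 x := (nR (x (c2 k))).
Local Notation B := (B b).

Lemma feas_core (x y : point d k.+3) : x (c0 k) = y (c0 k) -> x (c1 k) = y (c1 k) ->
  x (c2 k) = y (c2 k) -> feasible A b y -> feasible A b x.
Proof. by move=> e0 e1 e2 /feasE; rewrite -e0 -e1 -e2 => /feasE. Qed.

Lemma conn : sol_graph_connected d A b.
Proof.
move=> p q fp fq.
have [a1 ha1] := exmin ord0 (fun a : 'I_d.+1 => Num.max (B 0 - nR a) (B 1 + nR a)).
have [a2 ha2] := exmin ord0 (fun a : 'I_d.+1 => Num.max (B 2 - nR a) (B 3 + nR a)).
have step : forall x : point d k.+3, feasible A b x ->
   feasible A b (upd (upd x (c1 k) a1) (c2 k) a2) /\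
   connect (sol_edge A b) x (upd (upd x (c1 k) a1) (c2 k) a2).
  move=> x fx.
  have fx1 : feasible A b (upd x (c1 k) a1).
    move/feasE: fx => [h0 h1 h2 h3 h4]; apply/feasE.
    rewrite upd_same !upd_other //.
    have [g0 g1] := maxle (X := X0 x) (ha1 (x (c1 k))) ltac:(lra) ltac:(lra).
    split => //; lra.
  have fx2 : feasible A b (upd (upd x (c1 k) a1) (c2 k) a2).
    move/feasE: fx1 => [h0 h1 h2 h3 h4]; apply/feasE.
    rewrite upd_same !(@upd_other _ _ _ (c2 k)) //.
    set y := upd x (c1 k) a1 in h0 h1 h2 h3 *.
    have g : B 2 - X2 y <= - X0 y /\ B 3 + X2 y <= - X0 y by split; lra.
    have [g0 g1] := maxle (ha2 (y (c2 k))) g.1 g.2.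
    split => //; lra.
  split => //; apply: (connect_trans (y := upd x (c1 k) a1)); exact: seg.
have [fp2 cp] := step p fp; have [fq2 cq] := step q fq.
set p2 := upd (upd p _ _) _ _ in fp2 cp *.
set q2 := upd (upd q _ _) _ _ in fq2 cq *.
have e1 : p2 (c1 k) = q2 (c1 k) by rewrite /p2 /q2 !ffunE /=.
have e2 : p2 (c2 k) = q2 (c2 k) by rewrite /p2 /q2 !ffunE /=.
pose p3 := upd q2 (c0 k) (p2 (c0 k)).
have fp3 : feasible A b p3.
  by apply: (feas_core (y := p2)) => //; rewrite /p3 ffunE /= ?e1 ?e2.
apply: (connect_trans (y := p2)) => //.
apply: (connect_trans (y := p3)).
  apply: (cube (erefl _)) => w hw; apply: (feas_core (y := p2)) => //.
  - by case: (hw (c0 k)) => ->; rewrite /p3 ffunE /= ?e1 ?e2.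
  - by case: (hw (c1 k)) => ->; rewrite /p3 ffunE /= ?e1 ?e2.
  - by case: (hw (c2 k)) => ->; rewrite /p3 ffunE /= ?e1 ?e2.
apply: (connect_trans (y := q2)).
  have := seg (j := c0 k) (v := q2 (c0 k)) fp3.
  by rewrite /p3 upd_upd upd_id; apply.
by rewrite (sym_connect_sym (@sol_edge_sym d _ _ A b)).
Qed.
End U.

Lemma blockC m n (A : 'M[R]_(m, n)) J j ip jp i_n jn :
  0 < A ip j -> jp \in J :\ j -> A ip jp != 0 ->
  A i_n j < 0 -> jn \in J :\ j -> A i_n jn != 0 -> ~~ can_elim A J j.
Proof.
move=> hp hjp ap hn hjn an; rewrite /can_elim negb_and negb_or; apply/orP; right.
apply/andP; split; apply/negP.
  by move=> /forallP /(_ ip) /implyP /(_ hp) /forallP /(_ jp) /implyP /(_ hjp); apply/negP.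
by move=> /forallP /(_ i_n) /implyP /(_ hn) /forallP /(_ jn) /implyP /(_ hjn); apply/negP.
Qed.

Section V.
Variables (l k : nat).
Local Notation A := (Amx l.+4 k.+3).
Definition r (i : nat) (h : (i < l.+4)%nat) : 'I_l.+4 := Ordinal h.

Lemma noelim (J : {set 'I_k.+3}) (j : 'I_k.+3) : c0 k \in J -> c1 k \in J -> c2 k \in J ->
  (val j < 3)%nat -> ~~ can_elim A J j.
Proof.
move=> h0 h1 h2; case: j => -[|[|[|j]]] hj // _.
- refine (@blockC _ _ A J _ (@r 0 isT) (c1 k) (@r 2 isT) (c2 k) _ _ _ _ _ _); rewrite ?inE ?mxE //=.
  - exact: oner_neq0.
  - rewrite oppr_lt0. exact: ltr01.
  - exact: oner_neq0.
- apply: (@blockC _ _ _ _ _ (@r 0 isT) (c0 k) (@r 1 isT) (c0 k)); rewrite ?inE ?mxE //=.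
  - exact: oner_neq0.
  - rewrite oppr_lt0. exact: ltr01.
  - exact: oner_neq0.
- refine (@blockC _ _ A J _ (@r 2 isT) (c0 k) (@r 3 isT) (c0 k) _ _ _ _ _ _); rewrite ?inE ?mxE //=.
  - rewrite oppr_eq0; exact: oner_neq0.
  - rewrite oppr_lt0. exact: ltr01.
  - rewrite oppr_eq0; exact: oner_neq0.
Qed.
End V.

Lemma elim_core l k : forall (s : seq 'I_k.+3) (J : {set 'I_k.+3}),
  elim_seq (Amx l.+4 k.+3) J s -> c0 k \in J -> c1 k \in J -> c2 k \in J -> c0 k \notin s.
Proof.
elim => [|j s IH] J //= [ce es] h0 h1 h2.
case: (ltnP (val j) 3%nat) => hj.
  by move: ce; rewrite (negbTE (@noelim l k J j h0 h1 h2 hj)).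
have hj0 : c0 k != j by apply/eqP => e; move: hj; rewrite -e.
have hj1 : c1 k != j by apply/eqP => e; move: hj; rewrite -e.
have hj2 : c2 k != j by apply/eqP => e; move: hj; rewrite -e.
rewrite inE negb_or hj0 /=; apply: (IH _ es); by rewrite !inE ?hj0 ?hj1 ?hj2.
Qed.

Local Close Scope ring_scope.

Theorem theorem1 (m n d : nat) (hm : (4 <= m)%N) (hn : (3 <= n)%N)
    (hd : (0 < d)%N) :
  exists A : 'M[R]_(m, n),
    ~ has_EO A /\
    forall b : 'cV[R]_m, sol_graph_connected d A b.
Proof.
case: m hm => [|[|[|[|l]]]] // _; case: n hn => [|[|[|k]]] // _.
exists (Amx l.+4 k.+3); split; last by move=> b; apply: conn.
case=> s [hp he].
have : c0 k \in s by rewrite (perm_mem hp) mem_enum.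
by apply/negP; apply: (elim_core he); rewrite inE.
Qed.
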